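(* For every $\ell\ge0$ and every $\mathbf z=(z_1,\dots,z_{K-1})\in[0,1)^{K-1}$ at which $1-z_\kappa\zeta_+(z_1,\dots,z_\kappa)\neq0$ for all $\kappa=1,\dots,K-1$, $$G_\ell(z_1,\dots,z_{K-1})=(1-r)\,\zeta_-(z_1,\dots,z_{K-1})^{\ell}\prod_{\kappa=1}^{K-1}\frac{1-z_\kappa\,\zeta_+(z_1,\dots,z_{\kappa-1})}{1-z_\kappa\,\zeta_+(z_1,\dots,z_\kappa)}.$$ For $K=2$ this reads $G_\ell(z_1)=(1-r)\zeta_-(z_1)^\ell(1-z_1)/(1-z_1\zeta_+(z_1))$.
   Context: Fix integers $c\ge 1$, $K\ge 2$ and reals $r_1,\dots,r_K>0$ with $r=\sum_{k=1}^K r_k<1$ (here $r_k=\lambda_k/(c\mu)$ for an M/M/$c$ queue with $K$ non-preemptive priority levels, level 1 the highest, Poisson arrival rates $\lambda_k$ and common exponential service rate $\mu$). Write $\sigma_k=\sum_{j=1}^k r_j$ ($\sigma_0=0$, $\sigma_K=r$), $\mathbf e_\kappa$ for the standard unit vectors of $\mathbb Z^K$, $\delta_{ij}$ for the Kronecker delta. Consider the equations for $(p_{\mathbf n})_{\mathbf n\in\mathbb N_0^K}$, with the convention $p_{\mathbf n}=0$ if some component of $\mathbf n$ is negative: $$(1+r)p_{\mathbf n}=\Big(\prod_{j=1}^K\delta_{0n_j}\Big)p_{\mathbf n}+\sum_{\kappa=1}^K\Big[r_\kappa p_{\mathbf n-\mathbf e_\kappa}+\Big(\prod_{j=1}^{\kappa-1}\delta_{0n_j}\Big)p_{\mathbf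 n+\mathbf e_\kappa}\Big],\quad \mathbf n\in\mathbb N_0^K .$$ These are the stationary balance equations for the states in which all $c$ servers are busy and $n_\kappa$ clients of level $\kappa$ wait in the queue; their nonnegative summable solutions form a one-dimensional cone, and $P$ denotes the unique solution with $\sum_{\mathbf n}P(\mathbf n)=1$. For $\kappa=0,1,\dots,K-1$ and $z_1,\dots,z_\kappa\in[0,1]$ define $\beta(z_1,\dots,z_\kappa)=\sum_{k=1}^\kappa z_k r_{K+1-k}$ (so $\beta()=0$) and $$\zeta_\pm(z_1,\dots,z_\kappa)=\tfrac12\Big[1+r-\beta\pm\sqrt{(1+r-\beta)^2-4\sigma_{K-\kappa}}\Big],\quad \beta=\beta(z_1,\dots,z_\kappa),$$ the two real roots of $\zeta^2-(1+r-\beta)\zeta+\sigma_{K-\kappa}=0$; in particular $\zeta_+()=1$, $\zeta_-()=r$. For $\ell\ge0$ define $$G_\ell(z_1,\dots,z_{K-1})=\sum_{n_2,\dots,n_K\ge0}P(\ell,n_2,\dots,n_K)\prod_{j=2}^K z_{K+1-j}^{\,n_j},$$ so $z_1$ is paired with the lowest level $K$ and $z_{K-1}$ with level $2$. *)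

(* Defs.v *)
From HB Require Import structures.
From mathcomp Require Import all_boot all_order all_algebra.
From mathcomp Require Import all_classical all_reals all_analysis.
Set Implicit Arguments. Unset Strict Implicit. Unset Printing Implicit Defensive.
Import Order.TTheory GRing.Theory Num.Theory.
Local Open Scope ring_scope.
Local Open Scope classical_set_scope.

(* A state n = (n_1,...,n_K) in N_0^K is a finite function 'I_K -> nat;
   level k (1 <= k <= K) is stored at index k-1. *)
Definition lev (K : nat) (n : {ffun 'I_K -> nat}) (k : nat) : nat :=
  odflt 0%N (omap n (insub k.-1 : option 'I_K)).

(* n - e_{j+1} (only used when n j > 0) and n + e_{j+1}, for j : 'I_K *)
Definition decr (K : nat) (n : {ffun 'I_K -> nat}) (j : 'I_K) : {ffun 'I_K -> nat} :=
  [ffun i => if i == j then (n i).-1 else n i].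
Definition incr (K : nat) (n : {ffun 'I_K -> nat}) (j : 'I_K) : {ffun 'I_K -> nat} :=
  [ffun i => if i == j then (n i).+1 else n i].

Section Defs.
Variable R : realType.

Definition sigma (r : nat -> R) (m : nat) : R := \sum_(1 <= j < m.+1) r j.

(* balance equations; p(n - e_kappa) := 0 when n_kappa = 0 *)
Definition balance (K : nat) (r : nat -> R) (p : {ffun 'I_K -> nat} -> R) : Prop :=
  forall n : {ffun 'I_K -> nat},
    (1 + sigma r K) * p n =
      (if [forall i : 'I_K, n i == 0%N] then p n else 0)
      + \sum_(j < K)
          (r j.+1 * (if n j == 0%N then 0 else p (decr n j))
           + (if [forall i : 'I_K, (i < j)%N ==> (n i == 0%N)]
              then p (incr n j) else 0)).

Definition beta (r : nat -> R) (K : nat) (z : nat -> R) (kappa : nat) : R :=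
  \sum_(1 <= k < kappa.+1) z k * r (K.+1 - k)%N.

Definition bb (r : nat -> R) (K : nat) (z : nat -> R) (kappa : nat) : R :=
  1 + sigma r K - beta r K z kappa.

Definition zeta_plus (r : nat -> R) (K : nat) (z : nat -> R) (kappa : nat) : R :=
  (bb r K z kappa + Num.sqrt (bb r K z kappa ^+ 2 - 4 * sigma r (K - kappa)%N)) / 2.
Definition zeta_minus (r : nat -> R) (K : nat) (z : nat -> R) (kappa : nat) : R :=
  (bb r K z kappa - Num.sqrt (bb r K z kappa ^+ 2 - 4 * sigma r (K - kappa)%N)) / 2.

Definition Gfun (K : nat) (P : {ffun 'I_K -> nat} -> R) (z : nat -> R) (l : nat)
  : \bar R :=
  esum [set n : {ffun 'I_K -> nat} | lev n 1 = l]
    (fun n => (P n * \prod_(2 <= j < K.+1) z (K.+1 - j)%N ^+ lev n j)%:E).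

End Defs.

(* Main.v *)
Require Import Defs.
From HB Require Import structures.
From mathcomp Require Import all_boot all_order all_algebra.
From mathcomp Require Import all_classical all_reals all_analysis.
From mathcomp Require Import ring lra zify.
Import Order.TTheory GRing.Theory Num.Theory.
Local Open Scope ring_scope.
Local Open Scope classical_set_scope.

Section Esum.
Variables (R : realType) (T : choiceType).
Lemma esumZ (S : set T) (a : T -> \bar R) (c : R) : 0 <= c ->
  (forall i, (0 <= a i)%E) ->
  esum S (fun i => (c%:E * a i)%E) = (c%:E * esum S a)%E.
Proof.
move=> c0 a0; rewrite /esum -ereal_supZl //; last first.
  apply/set0P; exists (\sum_(x \in set0) a x)%R; exists set0 => //; exact: fsets_set0.
congr ereal_sup; apply/seteqP; split.
- move=> _ [A [finA AS] <-]; exists (\sum_(x \in A) a x)%R; first by exists A.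
  by rewrite !fsbig_finite // ge0_sume_distrr.
- move=> _ [_ [A [finA AS] <-] <-]; exists A => //.
  by rewrite !fsbig_finite // ge0_sume_distrr.
Qed.
End Esum.

Section Basic.
Variable R : realType.
Variable K : nat.
Local Notation T := {ffun 'I_K -> nat}.

Definition cnd (n : T) (j : 'I_K) : bool := [forall i : 'I_K, (i < j)%N ==> (n i == 0%N)].
Definition top (t : nat) (n : T) : nat := (\sum_(i < K | (i < t)%N) n i)%N.
Definition wt (x : 'I_K -> R) (n : T) : R := \prod_(i < K) x i ^+ n i.
Definition n0 : T := [ffun => 0%N].

Lemma incrE (n : T) j i : incr n j i = if i == j then (n i).+1 else n i.
Proof. by rewrite ffunE. Qed.

Lemma decr_incr (n : T) j : decr (incr n j) j = n.
Proof. by apply/ffunP => i; rewrite !ffunE; case: (i == j). Qed.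

Lemma incr_decr (n : T) j : n j != 0%N -> incr (decr n j) j = n.
Proof.
move=> nj; apply/ffunP => i; rewrite !ffunE; case: eqP => [->|//].
by rewrite prednK // lt0n.
Qed.

Lemma incr_inj j : injective (fun n : T => incr n j).
Proof. by move=> n m /(congr1 (fun u => decr u j)); rewrite !decr_incr. Qed.

Lemma top_incr t (n : T) j : top t (incr n j) = (top t n + (j < t))%N.
Proof.
rewrite /top; case: (ltnP j t) => jt.
  rewrite (bigD1 j) //= [in RHS](bigD1 j) //= incrE eqxx.
  rewrite (eq_bigr (fun i => n i)); first by rewrite addSn addn1.
  by move=> i /andP[_ ij]; rewrite incrE (negPf ij).
rewrite addn0; apply: eq_bigr => i it; rewrite incrE; case: eqP => // ij.
by move: it; rewrite ij ltnNge jt.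
Qed.

Lemma wt_incr x (n : T) j : wt x (incr n j) = x j * wt x n.
Proof.
rewrite /wt (bigD1 j) //= [in RHS](bigD1 j) //= incrE eqxx exprS -mulrA.
congr (_ * (_ * _)); apply: eq_bigr => i ij; by rewrite incrE (negPf ij).
Qed.

Lemma cnd_incr (n : T) j : cnd (incr n j) j = cnd n j.
Proof.
rewrite /cnd; apply: eq_forallb => i; rewrite incrE.
by case: (eqVneq i j) => [->|_]; rewrite ?ltnn.
Qed.

Lemma top_n0 t : top t n0 = 0%N.
Proof. by rewrite /top big1 // => i _; rewrite ffunE. Qed.

Lemma wt_n0 x : wt x n0 = 1.
Proof. by rewrite /wt big1 // => i _; rewrite ffunE expr0. Qed.

Lemma wt_ge0 x (n : T) : (forall i, 0 <= x i) -> 0 <= wt x n.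
Proof. by move=> h; rewrite /wt prodr_ge0 // => i _; rewrite exprn_ge0. Qed.

Lemma wt_le1 x (n : T) : (forall i, 0 <= x i <= 1) -> wt x n <= 1.
Proof.
move=> h; rewrite /wt prodr_ile1 // => i _; have /andP[h0 h1] := h i.
by rewrite exprn_ge0 // exprn_ile1.
Qed.

Lemma esum_incr (j : 'I_K) (F : T -> \bar R) (Q : pred T) :
  esum [set: T] (fun n : T => if (n j != 0%N) && Q n then F n else 0%E) =
  esum [set: T] (fun m : T => if Q (incr m j) then F (incr m j) else 0%E).
Proof.
transitivity (esum [set n : T | n j != 0%N] (fun n : T => if Q n then F n else 0%E)).
  rewrite [RHS]esum_mkcond; apply: eq_esum => n _ /=.
  have -> : (n \in [set n1 : T | n1 j != 0%N]) = (n j != 0%N).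
    by apply/idP/idP => [/set_mem|/mem_set].
  by case: (n j != 0%N).
rewrite (reindex_esum [set: T] _ (fun m : T => incr m j)); first by [].
split.
- by move=> m _ /=; rewrite incrE eqxx.
- by move=> m1 m2 _ _; apply: incr_inj.
- by move=> n /= nj; exists (decr n j) => //; apply: incr_decr.
Qed.

Lemma first_nz t (n : T) (e : \bar R) : top t n != 0%N ->
  (\sum_(j < K | (j < t)%N) (if (n j != 0%N) && cnd n j then e else 0%E))%R = e.
Proof.
move=> tn.
have [i0 i0t ni0] : exists2 i : 'I_K, (i < t)%N & n i != 0%N.
  case: (pickP (fun i : 'I_K => (i < t)%N && (n i != 0%N))) => [i /andP[]|none].
    by move=> ??; exists i.
  move: tn; rewrite /top big1 // => i it; move: (none i); rewrite it /=.
  by move/negbFE/eqP.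
case: (@arg_minnP _ i0 (fun i : 'I_K => (i < t)%N && (n i != 0%N)) (fun i => nat_of_ord i)).
  by rewrite i0t ni0.
move=> j0 /andP[j0t nj0] minj0.
have key : forall j : 'I_K, (j < t)%N -> ((n j != 0%N) && cnd n j) = (j == j0).
  move=> j jt; case: (eqVneq j j0) => [->|jj0].
    rewrite nj0 /=; apply/forallP => i; apply/implyP => ij0.
    apply/negPn/negP => ni; have := minj0 i; rewrite ni (ltn_trans ij0 j0t) /=.
    by move=> /(_ isT); rewrite leqNgt ij0.
  apply/negbTE/negP => /andP[nj /forallP/(_ j0)/implyP cj].
  have := minj0 j; rewrite jt nj => /(_ isT); rewrite leq_eqVlt => /orP[/eqP e'|lt].
    by move: jj0; rewrite (val_inj e') eqxx.
  by move: (cj lt); rewrite (negPf nj0).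
rewrite (bigD1 j0) //= big1 ?adde0; first by rewrite key // eqxx.
by move=> j /andP[jt jj0]; rewrite key // (negPf jj0).
Qed.

End Basic.
Arguments cnd {K}.
Arguments top {K}.
Arguments wt {R K}.

Section Basic2.
Variable R : realType.
Variable K : nat.
Local Notation T := {ffun 'I_K -> nat}.

Lemma top_nz_ex t (n : T) : top t n != 0%N -> exists2 i : 'I_K, (i < t)%N & n i != 0%N.
Proof.
move=> tn.
case: (pickP (fun i : 'I_K => (i < t)%N && (n i != 0%N))) => [i /andP[]|none].
  by move=> ??; exists i.
move: tn; rewrite /top big1 // => i it; move: (none i); rewrite it /=.
by move/negbFE/eqP.
Qed.

Lemma esum_pt (m : T) (e : \bar R) : (0 <= e)%E ->
  esum [set: T] (fun n : T => if n == m then e else 0%E) = e.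
Proof.
move=> e0; rewrite (esumID [set m]); last by move=> n _; case: (n == m).
rewrite [X in (_ + X)%E]esum1 ?adde0; last first.
  by move=> n [_ /= nm]; case: eqP => // /nm.
by rewrite setTI esum_set1 ?eqxx.
Qed.

Lemma all0_n0 (n : T) : [forall i, n i == 0%N] = (n == n0 K).
Proof.
apply/forallP/eqP => [h|-> i]; last by rewrite ffunE.
by apply/ffunP => i; rewrite ffunE; apply/eqP.
Qed.
End Basic2.

Section Stage.
Variable R : realType.
Variable K : nat.
Local Notation T := {ffun 'I_K -> nat}.
Variables (r : nat -> R) (P : T -> R).
Hypothesis P0 : forall n, 0 <= P n.
Hypothesis Psum : esum [set: T] (fun n : T => (P n)%:E) = 1%E.
Hypothesis Pbal : balance r P.
Hypothesis rpos : forall k, (1 <= k <= K)%N -> 0 < r k.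
Variables (x : 'I_K -> R) (t : nat).
Hypothesis x01 : forall i, 0 <= x i <= 1.
Hypothesis xtop : forall i : 'I_K, (i < t)%N -> x i = 1.

Lemma x_ge0 i : 0 <= x i. Proof. by case/andP: (x01 i). Qed.
Lemma Pw_ge0 n : 0 <= P n * wt x n.
Proof. by rewrite mulr_ge0 // wt_ge0 // => i; apply: x_ge0. Qed.
Lemma rj_gt0 (j : 'I_K) : 0 < r j.+1.
Proof. by apply: rpos; rewrite ltn_ord. Qed.
Lemma sigK_ge0 : 0 <= sigma r K.
Proof.
rewrite /sigma big_nat_cond sumr_ge0 // => i /andP[/andP[h1 h2] _].
by rewrite ltW //; apply: rpos; rewrite h1 -ltnS.
Qed.

Definition gE a : \bar R :=
  esum [set: T] (fun n : T => if top t n == a then (P n * wt x n)%:E else 0%E).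

Lemma esumQ_bnd (Q : pred T) :
  (0 <= esum [set: T] (fun n : T => if Q n then (P n * wt x n)%:E else 0%E) <= 1)%E.
Proof.
apply/andP; split; first by apply: esum_ge0 => n _; case: (Q n); rewrite // lee_fin Pw_ge0.
rewrite -Psum; apply: le_esum => n _; case: (Q n); rewrite lee_fin //.
by rewrite ler_piMr // wt_le1.
Qed.

Definition g a : R := fine (gE a).
Lemma gEE a : gE a = (g a)%:E.
Proof.
have /andP[h0 h1] := esumQ_bnd (fun n => top t n == a).
rewrite /g fineK // ge0_fin_numE // (le_lt_trans h1) // ?ltry.
by []. Qed.
Lemma g_ge0 a : 0 <= g a.
Proof. have /andP[h0 _] := esumQ_bnd (fun n => top t n == a); by rewrite -lee_fin -gEE. Qed.
Lemma g_le1 a : g a <= 1.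
Proof. have /andP[_ h1] := esumQ_bnd (fun n => top t n == a); by rewrite -lee_fin -gEE. Qed.

Definition fA a (n : T) : \bar R :=
  if top t n == a then ((if [forall i, n i == 0%N] then P n else 0) * wt x n)%:E else 0%E.
Definition fB a (j : 'I_K) (n : T) : \bar R :=
  if top t n == a then (r j.+1 * (if n j == 0%N then 0 else P (decr n j)) * wt x n)%:E else 0%E.
Definition fC a (j : 'I_K) (n : T) : \bar R :=
  if top t n == a then ((if cnd n j then P (incr n j) else 0) * wt x n)%:E else 0%E.

Lemma fA_ge0 a n : (0 <= fA a n)%E.
Proof.
rewrite /fA; case: (_ == _) => //; rewrite lee_fin; apply: mulr_ge0.
  by case: ifP.
by apply: wt_ge0 => i; apply: x_ge0.
Qed.
Lemma fB_ge0 a j n : (0 <= fB a j n)%E.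
Proof.
rewrite /fB; case: (_ == _) => //; rewrite lee_fin; apply: mulr_ge0.
  by apply: mulr_ge0; [exact: ltW (rj_gt0 j) | case: ifP].
by apply: wt_ge0 => i; apply: x_ge0.
Qed.
Lemma fC_ge0 a j n : (0 <= fC a j n)%E.
Proof.
rewrite /fC; case: (_ == _) => //; rewrite lee_fin; apply: mulr_ge0.
  by case: ifP.
by apply: wt_ge0 => i; apply: x_ge0.
Qed.

Lemma bal_sum a : ((1 + sigma r K)%:E * gE a)%E =
  (esum [set: T] (fA a) + \sum_(j < K) esum [set: T] (fB a j)
   + \sum_(j < K) esum [set: T] (fC a j))%E.
Proof.
rewrite /gE -esumZ; last 2 first.
- by rewrite addr_ge0 ?sigK_ge0.
- by move=> n; case: (_ == _); rewrite // lee_fin Pw_ge0.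
rewrite -!esum_sum; last 2 first.
- by move=> n j _ _; apply: fC_ge0.
- by move=> n j _ _; apply: fB_ge0.
rewrite -!esumD; last 4 first.
- by move=> n _; rewrite adde_ge0 ?fA_ge0 // sume_ge0 // => j _; apply: fB_ge0.
- by move=> n _; rewrite sume_ge0 // => j _; apply: fC_ge0.
- by move=> n _; apply: fA_ge0.
- by move=> n _; rewrite sume_ge0 // => j _; apply: fB_ge0.
apply: eq_esum => n _; rewrite /fA /fB /fC.
case: (top t n == a) => /=; last by rewrite mule0 !big1 ?adde0.
rewrite -EFinM !sumEFin -!EFinD; congr EFin.
rewrite mulrA Pbal mulrDl big_distrl /=.
under eq_bigr do rewrite mulrDl.
by rewrite big_split /= addrA.
Qed.

Lemma piece_A a : esum [set: T] (fA a) = if a == 0%N then (P (n0 K))%:E else 0%E.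
Proof.
transitivity (esum [set: T] (fun n : T => if n == n0 K then
   (if a == 0%N then (P (n0 K))%:E else 0%E) else 0%E)).
  apply: eq_esum => n _; rewrite /fA all0_n0; case: (eqVneq n (n0 K)) => [->|_].
    by rewrite top_n0 wt_n0 mulr1 eq_sym.
  by case: (_ == _); rewrite // mul0r.
by rewrite esum_pt //; case: (a == 0%N); rewrite // lee_fin.
Qed.

Lemma piece_B a (j : 'I_K) : esum [set: T] (fB a j) =
  ((r j.+1 * x j)%:E * esum [set: T] (fun m : T =>
      if (top t m + (j < t) == a)%N then (P m * wt x m)%:E else 0%E))%E.
Proof.
transitivity (esum [set: T] (fun n : T => if (n j != 0%N) && (top t n == a)
   then (r j.+1 * P (decr n j) * wt x n)%:E else 0%E)).
  apply: eq_esum => n _; rewrite /fB; case: (top t n == a); case: (n j == 0%N) => //=.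
  by rewrite mulr0 mul0r.
rewrite esum_incr -esumZ; last 2 first.
- by rewrite mulr_ge0 ?x_ge0 // ltW ?rj_gt0.
- by move=> m; case: (_ == _); rewrite // lee_fin Pw_ge0.
apply: eq_esum => m _; rewrite decr_incr top_incr wt_incr.
case: (_ == _); last by rewrite mule0.
by rewrite -EFinM; congr EFin; ring.
Qed.

Lemma piece_B_lo a (j : 'I_K) : (j < t)%N -> esum [set: T] (fB a j) =
  if a is a'.+1 then ((r j.+1)%:E * gE a')%E else 0%E.
Proof.
move=> jt; rewrite piece_B jt /= xtop // mulr1; case: a => [|a].
  by rewrite esum1 ?mule0 // => m _; rewrite addn1.
by congr (_ * _)%E; apply: eq_esum => m _; rewrite addn1 eqSS.
Qed.

Lemma piece_B_hi a (j : 'I_K) : (t <= j)%N -> esum [set: T] (fB a j) =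
  ((r j.+1 * x j)%:E * gE a)%E.
Proof.
move=> tj; rewrite piece_B; have -> : (j < t)%N = false by rewrite ltnNge tj.
by congr (_ * _)%E; apply: eq_esum => m _; rewrite addn0.
Qed.

Lemma piece_C_lo a (j : 'I_K) : (j < t)%N -> esum [set: T] (fC a j) =
  esum [set: T] (fun n : T => if (top t n == a.+1) && ((n j != 0%N) && cnd n j)
     then (P n * wt x n)%:E else 0%E).
Proof.
move=> jt.
transitivity (esum [set: T] (fun m : T =>
   if (fun n : T => (top t (decr n j) == a) && cnd (decr n j) j) (incr m j)
   then (fun n : T => (P n * wt x (decr n j))%:E) (incr m j) else 0%E)).
  apply: eq_esum => m _ /=; rewrite decr_incr /fC.
  by case: (top t m == a); case: (cnd m j) => //=; rewrite mul0r.
rewrite -(@esum_incr R K j (fun n : T => (P n * wt x (decr n j))%:E)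
           (fun n : T => (top t (decr n j) == a) && cnd (decr n j) j)).
apply: eq_esum => n _.
case: (boolP (n j != 0%N)) => nj /=; last by rewrite andbF.
have [m ->] : exists m, n = incr m j by exists (decr n j); rewrite incr_decr.
rewrite decr_incr top_incr jt /= addn1 eqSS cnd_incr wt_incr xtop // mul1r.
by case: (top t m == a); case: (cnd m j).
Qed.

Lemma C_lo_sum a : (\sum_(j < K | (j < t)%N) esum [set: T] (fC a j))%E = gE a.+1.
Proof.
rewrite (eq_bigr (fun j : 'I_K => esum [set: T] (fun n : T =>
   if (top t n == a.+1) && ((n j != 0%N) && cnd n j) then (P n * wt x n)%:E else 0%E)));
  last by move=> j jt; apply: piece_C_lo.
rewrite -esum_sum; last by move=> n j _ _; case: ifP; rewrite // lee_fin Pw_ge0.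
apply: eq_esum => n _; case: (eqVneq (top t n) a.+1) => h /=.
  by rewrite first_nz // h.
by rewrite big1.
Qed.

Lemma C_hi0 a (j : 'I_K) : (t <= j)%N -> esum [set: T] (fC a.+1 j) = 0%E.
Proof.
move=> tj; apply: esum1 => n _; rewrite /fC; case: eqP => // h.
have [i it ni] : exists2 i : 'I_K, (i < t)%N & n i != 0%N by apply: top_nz_ex; rewrite h.
suff -> : cnd n j = false by rewrite mul0r.
apply/negbTE/negP => /forallP/(_ i)/implyP; rewrite (leq_trans it tj) => /(_ isT).
by rewrite (negPf ni).
Qed.

Definition sig : R := \sum_(j < K | (j < t)%N) r j.+1.
Definition bet : R := \sum_(j < K | ~~ (j < t)%N) r j.+1 * x j.

Lemma sumB a : (\sum_(j < K) esum [set: T] (fB a.+1 j))%E = (sig * g a + bet * g a.+1)%:E.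
Proof.
rewrite (bigID (fun j : 'I_K => (j < t)%N)) /=.
rewrite (eq_bigr (fun j : 'I_K => (r j.+1 * g a)%:E)); last by move=> j jt; rewrite piece_B_lo // gEE.
rewrite [X in (_ + X)%E](eq_bigr (fun j : 'I_K => (r j.+1 * x j * g a.+1)%:E)); last first.
  by move=> j jt; rewrite piece_B_hi ?gEE // leqNgt.
by rewrite !sumEFin -EFinD /sig /bet -!big_distrl.
Qed.

Lemma sumB0 : (\sum_(j < K) esum [set: T] (fB 0%N j))%E = (bet * g 0%N)%:E.
Proof.
rewrite (bigID (fun j : 'I_K => (j < t)%N)) /= big1 ?add0e; last first.
  by move=> j jt; rewrite piece_B_lo.
rewrite (eq_bigr (fun j : 'I_K => (r j.+1 * x j * g 0%N)%:E)); last first.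
  by move=> j jt; rewrite piece_B_hi ?gEE // leqNgt.
by rewrite !sumEFin /bet -!big_distrl.
Qed.

Lemma stage_pos a : (1 + sigma r K) * g a.+1 = sig * g a + bet * g a.+1 + g a.+2.
Proof.
apply: EFin_inj; rewrite EFinM -gEE bal_sum piece_A /= add0e sumB.
rewrite (bigID (fun j : 'I_K => (j < t)%N)) /= C_lo_sum big1 ?adde0; last first.
  by move=> j jt; apply: C_hi0; rewrite leqNgt.
by rewrite gEE -EFinD.
Qed.

Definition DE : \bar R := (\sum_(j < K | ~~ (j < t)%N) esum [set: T] (fC 0%N j))%E.

Lemma stage0 : ((1 + sigma r K) * g 0%N)%:E = ((P (n0 K) + bet * g 0%N + g 1%N)%:E + DE)%E.
Proof.
rewrite EFinM -gEE bal_sum piece_A /= sumB0.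
rewrite (bigID (fun j : 'I_K => (j < t)%N)) /= C_lo_sum /DE gEE.
by rewrite !EFinD addeA.
Qed.

Lemma DE_fin : DE = ((1 + sigma r K) * g 0%N - P (n0 K) - bet * g 0%N - g 1%N)%:E.
Proof.
have := stage0; move: DE => d; case: d => [d||] //=.
by rewrite -EFinD => -[] h; congr EFin; lra.
Qed.

Lemma partial_le1 N : \sum_(a < N) g a <= 1.
Proof.
rewrite -lee_fin -sumEFin.
under eq_bigr do rewrite -gEE.
rewrite /gE -esum_sum; last by move=> n a _ _; case: ifP; rewrite // lee_fin Pw_ge0.
rewrite -Psum; apply: le_esum => n _.
case: (ltnP (top t n) N) => h.
  rewrite (bigD1 (Ordinal h)) //= eqxx big1 ?adde0; last first.
    by move=> a /eqP ah; case: eqP => // e; case: ah; apply: val_inj.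
  by rewrite lee_fin ler_piMr // wt_le1.
rewrite big1 ?lee_fin //; move=> a _; case: eqP => // e.
by move: (ltn_ord a); rewrite -e ltnNge h.
Qed.

End Stage.

Section Rec.
Variable R : realType.

Lemma rec_sol (g : nat -> R) (s p zp zm : R) :
  zp + zm = s -> zp * zm = p -> 1 <= zp ->
  (forall a, g a.+2 = s * g a.+1 - p * g a) ->
  (forall a, 0 <= g a) -> (forall N, \sum_(a < N) g a <= 1) ->
  forall a, g a = zm ^+ a * g 0%N.
Proof.
move=> hs hp zp1 rec g0 gs.
pose h a := g a.+1 - zm * g a.
have hS a : h a.+1 = zp * h a by rewrite /h rec -hs -hp; ring.
have hE a : h a = zp ^+ a * h 0%N.
  elim: a => [|a IH]; first by rewrite expr0 mul1r.
  by rewrite hS IH exprS mulrA.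
have hge a : `|h 0%N| <= `|h a|.
  rewrite (hE a) normrM; apply: ler_peMl => //; rewrite normrX exprn_ege1 //.
  by rewrite (le_trans zp1) // ler_norm.
have hle a : `|h a| <= g a.+1 + `|zm| * g a.
  rewrite /h (le_trans (ler_normB _ _)) // normrM (ger0_norm (g0 _)).
  by rewrite (ger0_norm (g0 _)).
have bound N : N%:R * `|h 0%N| <= 1 + `|zm|.
  have e1 : N%:R * `|h 0%N| = \sum_(a < N) `|h 0%N|.
    by rewrite sumr_const card_ord mulr_natl.
  rewrite e1; apply: (le_trans (y := \sum_(a < N) (g a.+1 + `|zm| * g a))).
    by apply: ler_sum => a _; apply: le_trans (hge a) (hle a).
  rewrite big_split /= -mulr_sumr; apply: lerD.
    have e2 : \sum_(a < N.+1) g a = g 0%N + \sum_(a < N) g a.+1 by rewrite big_ord_recl.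
    have := gs N.+1; rewrite e2 => h2; have := g0 0%N; lra.
  by apply: ler_piMr; [exact: normr_ge0 | exact: gs].
have h00 : h 0%N = 0.
  apply/eqP; apply/negPn/negP => hn.
  have hp0 : 0 < `|h 0%N| by rewrite normr_gt0.
  have := bound (Num.trunc ((1 + `|zm|) / `|h 0%N|)).+1.
  have := truncnS_gt ((1 + `|zm|) / `|h 0%N|).
  rewrite ltr_pdivrMr // => lt le.
  by move: lt; rewrite ltNge le.
have hz a : h a = 0 by rewrite hE h00 mulr0.
elim=> [|a IH]; first by rewrite expr0 mul1r.
have := hz a; rewrite /h => /eqP; rewrite subr_eq0 => /eqP ->.
by rewrite IH exprS mulrA.
Qed.

Lemma zeta_facts (b s : R) : 0 <= s -> 1 + s <= b ->
  (b + Num.sqrt (b ^+ 2 - 4 * s)) / 2 + (b - Num.sqrt (b ^+ 2 - 4 * s)) / 2 = b /\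
  (b + Num.sqrt (b ^+ 2 - 4 * s)) / 2 * ((b - Num.sqrt (b ^+ 2 - 4 * s)) / 2) = s /\
  1 <= (b + Num.sqrt (b ^+ 2 - 4 * s)) / 2.
Proof.
move=> s0 hb; set d := Num.sqrt _.
have D0 : 0 <= b ^+ 2 - 4 * s.
  have : 0 <= (1 - s) ^+ 2 by rewrite sqr_ge0.
  have : (1 + s) ^+ 2 <= b ^+ 2 by rewrite ler_pXn2r // ?nnegrE; lra.
  move=> h1 h2; nra.
have dd : d ^+ 2 = b ^+ 2 - 4 * s by rewrite sqr_sqrtr.
have d0 : 0 <= d by rewrite sqrtr_ge0.
split; first lra.
split.
  have -> : (b + d) / 2 * ((b - d) / 2) = (b ^+ 2 - d ^+ 2) / 4 by field.
  by rewrite dd; field.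
case: (lerP 2 b) => hb2; first lra.
have : (2 - b) ^+ 2 <= d ^+ 2 by rewrite dd; nra.
move=> h; have : 2 - b <= d.
  by rewrite -(ler_pXn2r (n := 2)) // nnegrE; lra.
lra.
Qed.
End Rec.

Import numFieldNormedType.Exports.

Section Final.
Variable R : realType.
Variable K : nat.
Local Notation T := {ffun 'I_K -> nat}.
Variables (r : nat -> R) (P : T -> R) (z : nat -> R).
Hypothesis K2 : (2 <= K)%N.
Hypothesis rpos : forall k, (1 <= k <= K)%N -> 0 < r k.
Hypothesis rlt1 : sigma r K < 1.
Hypothesis P0 : forall n, 0 <= P n.
Hypothesis Psum : esum [set: T] (fun n : T => (P n)%:E) = 1%E.
Hypothesis Pbal : balance r P.
Hypothesis z01 : forall k, (1 <= k < K)%N -> 0 <= z k < 1.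

Definition xs (t : nat) (i : 'I_K) : R := if (i < t)%N then 1 else z (K - i).

Lemma xs01 t : (1 <= t)%N -> forall i, 0 <= xs t i <= 1.
Proof.
move=> t1 i; rewrite /xs; case: ifP => it; first by rewrite ler01 lexx.
have /andP[h0 h1] : 0 <= z (K - i) < 1.
  apply: z01; have := ltn_ord i; move: it t1 => /negbT; rewrite -leqNgt; lia.
by rewrite h0 ltW.
Qed.

Lemma xstop t : forall i : 'I_K, (i < t)%N -> xs t i = 1.
Proof. by move=> i it; rewrite /xs it. Qed.

Definition G t a := g R K P (xs t) t a.
Definition sg t := sig R K r t.
Definition bt t := bet R K r (xs t) t.
Definition ZP t := zeta_plus r K z (K - t).
Definition ZM t := zeta_minus r K z (K - t).

Lemma sig_eq t : (t <= K)%N -> sg t = sigma r t.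
Proof.
move=> tK; rewrite /sg /sig /sigma big_add1 /= big_mkord.
by rewrite (big_ord_widen _ (fun j => r j.+1) tK).
Qed.

Lemma sigma_ge0 t : (t <= K)%N -> 0 <= sigma r t.
Proof.
move=> tK; rewrite /sigma big_nat_cond sumr_ge0 // => i /andP[/andP[h1 h2] _].
by rewrite ltW //; apply: rpos; rewrite h1 /=; lia.
Qed.

Lemma sigK_split t : sigma r K = sg t + \sum_(j < K | ~~ (j < t)%N) r j.+1.
Proof.
rewrite -(sig_eq K (leqnn K)) /sg /sig (bigID (fun j : 'I_K => (j < t)%N)) /=.
rewrite [X in X + _](eq_bigl (fun j : 'I_K => (j < t)%N)) //; last first.
  by move=> j; rewrite ltn_ord.
by rewrite [X in _ + X](eq_bigl (fun j : 'I_K => ~~ (j < t)%N)) // => j; rewrite ltn_ord.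
Qed.

Lemma bt_le t : (1 <= t)%N -> bt t <= \sum_(j < K | ~~ (j < t)%N) r j.+1.
Proof.
move=> t1; rewrite /bt /bet; apply: ler_sum => j jt.
have rj : 0 < r j.+1 by apply: rpos; rewrite ltn_ord.
by have /andP[_ h] := xs01 t t1 j; apply: ler_piMr; [exact: ltW rj | exact: h].
Qed.

Lemma bet_eq t : (1 <= t <= K)%N -> bt t = beta r K z (K - t).
Proof.
move=> /andP[t1 tK].
rewrite /bt /bet /beta big_add1 /= big_mkord.
rewrite (big_ord_widen _ (fun k => z k.+1 * r (K.+1 - k.+1)) (leq_subr t K)).
rewrite [RHS](reindex_inj rev_ord_inj) /=.
apply: eq_big => j.
  by rewrite -leqNgt; have jK := ltn_ord j; apply/idP/idP => ?; lia.
move=> jt; rewrite /xs (negPf jt) mulrC; have := ltn_ord j => jK.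
congr (z _ * r _); lia.
Qed.

Lemma zeta_t t : (1 <= t <= K)%N ->
  ZP t + ZM t = 1 + sigma r K - bt t /\ ZP t * ZM t = sg t /\ 1 <= ZP t.
Proof.
move=> /andP[t1 tK].
have e1 : sigma r (K - (K - t)) = sg t by rewrite subKn // sig_eq.
have e2 : bb r K z (K - t) = 1 + sigma r K - bt t by rewrite /bb bet_eq ?t1.
rewrite /ZP /ZM /zeta_plus /zeta_minus e1 -e2.
apply: zeta_facts; first by rewrite sig_eq // sigma_ge0.
rewrite e2; have := sigK_split t; have := bt_le t t1; lra.
Qed.

Lemma Gsol t : (1 <= t <= K)%N -> forall a, G t a = ZM t ^+ a * G t 0%N.
Proof.
move=> h; have /andP[t1 tK] := h; have [e1 [e2 e3]] := zeta_t t h.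
apply: (@rec_sol R (G t) (1 + sigma r K - bt t) (sg t) (ZP t) (ZM t)) => //.
- move=> a; have := stage_pos R K r P P0 Psum Pbal rpos (xs t) t (xs01 t t1) (xstop t) a.
  rewrite /G /sg /bt; lra.
- by move=> a; apply: (g_ge0 R K P P0 Psum (xs t) t (xs01 t t1)).
- by move=> N; apply: (partial_le1 R K P P0 Psum (xs t) t (xs01 t t1)).
Qed.

Lemma DE_t t : (1 <= t <= K)%N -> DE R K P (xs t) t = (ZP t * G t 0%N - P (n0 K))%:E.
Proof.
move=> h; have /andP[t1 tK] := h.
rewrite (DE_fin R K r P P0 Psum Pbal rpos (xs t) t (xs01 t t1) (xstop t)); congr EFin.
have e := Gsol t h 1; have [e1 _] := zeta_t t h.
rewrite /G in e *; rewrite e expr1.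
have -> : ZP t = 1 + sigma r K - bt t - ZM t by lra.
by rewrite /bt; ring.
Qed.

Lemma top_succ t (tK : (t < K)%N) (n : T) : top t.+1 n = (top t n + n (Ordinal tK))%N.
Proof.
rewrite /top (bigD1 (Ordinal tK)) //= addnC; congr (_ + _)%N.
by apply: eq_bigl => i; rewrite -val_eqE /= ltnS andbC -ltn_neqAle.
Qed.

Lemma top0_all t (n : T) : top t n = 0%N -> forall i : 'I_K, (i < t)%N -> n i = 0%N.
Proof.
move=> h i it; move: h; rewrite /top (bigD1 i) //= => /eqP.
by rewrite addn_eq0 => /andP[/eqP -> _].
Qed.

Lemma wt_succ t (tK : (t < K)%N) (n : T) : n (Ordinal tK) = 0%N ->
  wt (xs t) n = wt (xs t.+1) n.
Proof.
move=> h; apply: eq_bigr => i _; rewrite /xs.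
case: (eqVneq i (Ordinal tK)) => [->|ne] /=; first by rewrite h !expr0.
have e : (i < t.+1)%N = (i < t)%N.
  rewrite ltnS leq_eqVlt; suff -> : (i == t :> nat) = false by [].
  by apply/negbTE; move: ne; rewrite -val_eqE.
by rewrite e.
Qed.

Definition TE t (tK : (t < K)%N) : \bar R :=
  esum [set: T] (fun n : T => if top t n == 0%N then
     (P (incr n (Ordinal tK)) * wt (xs t) n)%:E else 0%E).

Lemma cross1 t (tK : (t < K)%N) : (1 <= t)%N ->
  DE R K P (xs t) t = (TE t tK + DE R K P (xs t.+1) t.+1)%E.
Proof.
move=> t1; rewrite /DE (bigD1 (Ordinal tK)) /=; last by rewrite ltnn.
congr (_ + _)%E.
  apply: eq_esum => n _; rewrite /fC; case: eqP => // h.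
  suff -> : cnd n (Ordinal tK) by [].
  by apply/forallP => i; apply/implyP => it; apply/eqP; exact: (top0_all _ _ h).
apply: eq_big => j.
  rewrite -val_eqE /= -!leqNgt; have jK := ltn_ord j.
  by apply/idP/idP => [/andP[h1 h2]|h]; [lia | apply/andP; split; lia].
move=> /andP[jt jne]; apply: eq_esum => n _; rewrite /fC top_succ.
case: (boolP (cnd n j)) => c; last by rewrite !mul0r; case: ifP; case: ifP.
have ht : n (Ordinal tK) = 0%N.
  apply/eqP; move/forallP: c => /(_ (Ordinal tK)) /implyP; apply => /=.
  by move: jt jne; rewrite -val_eqE /= -leqNgt => ??; lia.
by rewrite ht addn0 (wt_succ _ _ _ ht).
Qed.

Lemma z_ge0 t : (1 <= t)%N -> (t < K)%N -> 0 <= z (K - t).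
Proof. by move=> t1 tK; have /andP[] := z01 (K - t) ltac:(lia). Qed.

Lemma cross2 t (tK : (t < K)%N) : (1 <= t)%N ->
  gE R K P (xs t) t 0%N = (gE R K P (xs t.+1) t.+1 0%N + (z (K - t))%:E * TE t tK)%E.
Proof.
move=> t1; rewrite /gE.
have Pw u n m : (1 <= u)%N -> (0 <= (P n * wt (xs u) m)%:E)%E.
  move=> u1; rewrite lee_fin mulr_ge0 // wt_ge0 // => i.
  by have /andP[] := xs01 u u1 i.
transitivity (esum [set: T] (fun n : T =>
  ((if (n (Ordinal tK) == 0%N) && (top t n == 0%N) then (P n * wt (xs t) n)%:E else 0%E)
  + (if (n (Ordinal tK) != 0%N) && (top t n == 0%N) then (P n * wt (xs t) n)%:E else 0%E))%E)).
  apply: eq_esum => n _.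
  by case: (n (Ordinal tK) == 0%N); case: (top t n == 0%N); rewrite /= ?adde0 ?add0e.
rewrite esumD; last 2 first.
- by move=> n _; case: ifP => _; rewrite ?Pw.
- by move=> n _; case: ifP => _; rewrite ?Pw.
congr (_ + _)%E.
  apply: eq_esum => n _; rewrite top_succ addn_eq0 andbC.
  case: (eqVneq (n (Ordinal tK)) 0%N) => h /=; last by rewrite andbF.
  by rewrite andbT (wt_succ _ _ _ h).
rewrite esum_incr -esumZ; last 2 first.
- exact: z_ge0.
- by move=> n; case: ifP => _; rewrite ?Pw.
have hx : xs t (Ordinal tK) = z (K - t) by rewrite /xs /= ltnn.
apply: eq_esum => m _; rewrite top_incr /= ltnn addn0 wt_incr hx.
case: ifP => _; last by rewrite mule0.
by rewrite -EFinM; congr EFin; ring.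
Qed.

Lemma gE_G t a : (1 <= t)%N -> gE R K P (xs t) t a = (G t a)%:E.
Proof. by move=> t1; exact: (gEE R K P P0 Psum (xs t) t (xs01 t t1) a). Qed.

Lemma rel t : (1 <= t)%N -> (t < K)%N ->
  G t 0%N * (1 - z (K - t) * ZP t) = G t.+1 0%N * (1 - z (K - t) * ZP t.+1).
Proof.
move=> t1 tK.
have h1 : (1 <= t <= K)%N by rewrite t1 ltnW.
have h2 : (1 <= t.+1 <= K)%N by rewrite tK.
have c1 := cross1 t tK t1; rewrite (DE_t t h1) (DE_t t.+1 h2) in c1.
have [T' eT] : exists T', TE t tK = T'%:E.
  by move: (TE t tK) c1 => d; case: d => [d _|/= //|/= //]; exists d.
rewrite eT -EFinD in c1; case: c1 => c1.
have c2 := cross2 t tK t1; rewrite eT !gE_G // -EFinM -EFinD in c2; case: c2 => c2.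
have H : G t 0%N = G t.+1 0%N + z (K - t) * (ZP t * G t 0%N - ZP t.+1 * G t.+1 0%N).
  by rewrite {1}c2; congr (_ + _ * _); lra.
lra.
Qed.

Lemma GK0 : G K 0%N = P (n0 K).
Proof.
apply: EFin_inj; rewrite -gE_G; last by lia.
rewrite /gE -(@esum_pt R K (n0 K) (P (n0 K))%:E); last by rewrite lee_fin.
apply: eq_esum => n _.
case: (eqVneq n (n0 K)) => [->|ne]; first by rewrite top_n0 eqxx wt_n0 mulr1.
case: eqP => // h; exfalso; move/eqP: ne; apply; apply/ffunP => i; rewrite ffunE.
exact: (top0_all _ _ h i (ltn_ord i)).
Qed.

Lemma ZPK : ZP K = 1 /\ ZM K = sigma r K.
Proof.
have h : (1 <= K <= K)%N by rewrite leqnn andbT; lia.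
have [e1 [e2 e3]] := zeta_t K h.
have bK : bt K = 0 by rewrite /bt /bet big_pred0 // => j; rewrite ltn_ord.
have sK : sg K = sigma r K by rewrite sig_eq.
rewrite bK subr0 in e1; rewrite sK in e2.
have : (ZP K - 1) * (ZM K - 1) = 0.
  have -> : (ZP K - 1) * (ZM K - 1) = ZP K * ZM K - (ZP K + ZM K) + 1 by ring.
  by rewrite e1 e2; ring.
move/eqP; rewrite mulf_eq0 => /orP[/eqP h1|/eqP h2].
  split; lra.
have hm : ZM K = 1 by apply/eqP; rewrite -subr_eq0 h2.
have hp : ZP K = sigma r K by move: e1; rewrite hm addrC => /addrI.
by move: e3; rewrite hp leNgt rlt1.
Qed.

Lemma normP : P (n0 K) = 1 - sigma r K.
Proof.
have hK : (1 <= K <= K)%N by rewrite leqnn andbT; lia.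
have [_ eM] := ZPK.
have GKa a : G K a = P (n0 K) * sigma r K ^+ a by rewrite (Gsol K hK a) eM GK0 mulrC.
have s0 : 0 <= sigma r K := sigma_ge0 K (leqnn K).
have eS : esum [set: T] (fun n : T => (P n)%:E) = (\sum_(0 <= a <oo) (G K a)%:E)%E.
  rewrite nneseries_esumT; last first.
    by move=> a; rewrite lee_fin; apply: (g_ge0 R K P P0 Psum (xs K) K (xs01 K ltac:(lia))).
  have -> : [set: T] = \bigcup_(a in [set: nat]) [set u : T | top K u = a].
    by apply/seteqP; split => n // _; exists (top K n).
  rewrite esum_bigcupT; last 2 first.
  - by move=> a b _ _ [n [/= ha hb]]; rewrite -ha -hb.
  - by move=> n; rewrite lee_fin.
  apply: eq_esum => a _; rewrite -gE_G; last lia.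
  rewrite /gE esum_mkcond; apply: eq_esum => n _.
  have -> : (n \in [set u : T | top K u = a]) = (top K n == a).
    by apply/idP/idP => [/set_mem/eqP|/eqP/mem_set].
  have -> : wt (xs K) n = 1.
    by rewrite /wt big1 // => i _; rewrite /xs ltn_ord expr1n.
  by rewrite mulr1.
have eG : (\sum_(0 <= a <oo) (G K a)%:E)%E = (P (n0 K) / (1 - sigma r K))%:E.
  have sl : `|sigma r K| < 1 by rewrite ger0_norm.
  transitivity (limn (EFin \o series (geometric (P (n0 K)) (sigma r K)))).
    congr (limn _); apply/funext => N /=; rewrite /series /= -sumEFin.
    by apply: eq_bigr => a _; rewrite GKa.
  rewrite EFin_lim; last exact: is_cvg_geometric_series.
  by congr EFin; exact: cvg_lim (cvg_geometric_series (a := P (n0 K)) sl).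

move: Psum; rewrite eS eG => -[] e.
have nz : 1 - sigma r K != 0 by rewrite subr_eq0 eq_sym lt_eqF.
by move/(congr1 (fun v => v * (1 - sigma r K))): e; rewrite mul1r divfK.
Qed.

Lemma lev_ord (n : T) (i : 'I_K) : lev n i.+1 = n i.
Proof.
rewrite /lev /=; case: insubP => [j _ ej|]; last by move=> /negP []; exact: ltn_ord.
by rewrite /= (_ : j = i) //; apply: val_inj; rewrite ej.
Qed.

Lemma prod_eq (n : T) :
  \prod_(2 <= j < K.+1) z (K.+1 - j)%N ^+ lev n j = wt (xs 1) n.
Proof.
rewrite big_add1 /= big_geq_mkord /wt [RHS](bigID (fun i : 'I_K => (1 <= i)%N)) /=.
rewrite [X in _ = _ * X]big1 ?mulr1; last first.
  by move=> i; rewrite -ltnNge ltnS leqn0 => /eqP i0; rewrite /xs i0 /= expr1n.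
apply: eq_bigr => i i1; rewrite lev_ord /xs ltnNge i1 /=.
by rewrite subSS.
Qed.

Lemma Gfun_eq l : Gfun P z l = gE R K P (xs 1) 1 l.
Proof.
have K0 : (0 < K)%N by lia.
have top1 (n : T) : top 1 n = n (Ordinal K0).
  rewrite /top (bigD1 (Ordinal K0)) //= big1 ?addn0 // => i /andP[i1 ne].
  exfalso; move: ne; rewrite -val_eqE /=; move: i1; rewrite ltnS leqn0 => /eqP ->.
  by rewrite eqxx.
rewrite /Gfun /gE esum_mkcond; apply: eq_esum => n _.
have -> : (n \in [set u : T | lev u 1 = l]) = (top 1 n == l).
  rewrite top1 -(lev_ord n (Ordinal K0)).
  by apply/idP/idP => [/set_mem/eqP|/eqP/mem_set].
by rewrite prod_eq.
Qed.

Hypothesis zden : forall k, (1 <= k < K)%N -> 1 - z k * zeta_plus r K z k != 0.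

Lemma E_prod k : (k <= K.-1)%N -> G (K - k) 0%N = (1 - sigma r K) *
  \prod_(1 <= k' < k.+1) ((1 - z k' * zeta_plus r K z k'.-1) / (1 - z k' * zeta_plus r K z k')).
Proof.
elim: k => [|k IH] hk.
  by rewrite subn0 GK0 normP big_geq // mulr1.
rewrite big_nat_recr //= mulrA -IH; last by lia.
have t1 : (1 <= K - k.+1)%N by lia.
have tK : (K - k.+1 < K)%N by lia.
have := rel (K - k.+1) t1 tK.
have e1 : (K - (K - k.+1) = k.+1)%N by lia.
have e2 : (K - (K - k.+1).+1 = k)%N by lia.
have e3 : ((K - k.+1).+1 = K - k)%N by lia.
rewrite /ZP e1 e2 e3 => relE.
have nz : 1 - z k.+1 * zeta_plus r K z k.+1 != 0 by apply: zden; lia.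
by rewrite mulrA -relE mulfK.
Qed.

Lemma main_sec l : Gfun P z l =
    ((1 - sigma r K) * zeta_minus r K z K.-1 ^+ l
     * \prod_(1 <= k < K)
         ((1 - z k * zeta_plus r K z k.-1) / (1 - z k * zeta_plus r K z k)))%:E.
Proof.
have h1 : (1 <= 1 <= K)%N by lia.
rewrite Gfun_eq gE_G // (Gsol 1 h1 l); congr EFin.
have := E_prod K.-1 (leqnn _).
rewrite (_ : (K - K.-1 = 1)%N); last by lia.
rewrite (_ : K.-1.+1 = K); last by lia.
move=> ->; rewrite /ZM subn1; ring.
Qed.

End Final.


Theorem mainTheorem2 (R : realType) (K : nat) (r : nat -> R)
    (P : {ffun 'I_K -> nat} -> R) (l : nat) (z : nat -> R) :
  (2 <= K)%N ->
  (forall k, (1 <= k <= K)%N -> 0 < r k) ->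
  sigma r K < 1 ->
  (forall n, 0 <= P n) ->
  esum [set: {ffun 'I_K -> nat}] (fun n => (P n)%:E) = 1%E ->
  balance r P ->
  (forall k, (1 <= k < K)%N -> 0 <= z k < 1) ->
  (forall k, (1 <= k < K)%N -> 1 - z k * zeta_plus r K z k != 0) ->
  Gfun P z l =
    ((1 - sigma r K) * zeta_minus r K z K.-1 ^+ l
     * \prod_(1 <= k < K)
         ((1 - z k * zeta_plus r K z k.-1) / (1 - z k * zeta_plus r K z k)))%:E.
Proof.
move=> K2 rpos rlt1 P0 Psum Pbal z01 zden.
exact: (@main_sec R K r P z K2 rpos rlt1 P0 Psum Pbal z01 zden l).
Qed.
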